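(* Let $\mathcal{C}$ be a BMZ-collection, $\mathcal{R}\in\mathbf{R}$, and $a\in C\setminus\{z\}$. Then there is exactly one $\mathcal{R}'\in\mathbf{R}$ with $\mathcal{R}'\neq\mathcal{R}$ and $\Phi(\mathcal{R}-z-a)\subseteq\Phi(\mathcal{R}'-z)$ (i.e., having $\operatorname{conv}(\Phi(\mathcal{R}-z-a))$ as a face), and it satisfies $\operatorname{csgn}(\mathcal{R}')=-\operatorname{csgn}(\mathcal{R})$.
   Context: Standing notation: $N=(d+1)(r-1)$; $w_1,\ldots,w_r\in\mathbb{R}^{r-1}$ the vertices of a regular $(r-1)$-simplex centered at $0$; $\varphi_i(x)=(x,1)\otimes w_i\in\mathbb{R}^N$; for an $r$-tuple $\mathcal{P}=(P_1,\ldots,P_r)$ of pairwise disjoint finite sets, $\Phi(\mathcal{P})=\bigcup_i\{\varphi_i(p):p\in P_i\}$. A BMZ-collection is $\mathcal{C}=(C_1,\ldots,C_{d+2})$, pairwise disjoint finite subsets of $\mathbb{R}^d$, $|C_1|=\cdots=|C_{d+1}|=r-1$, $C_{d+2}=\{z\}$; ground set $C=\{c_1,\ldots,c_{N+1}\}$, $c_{N+1}=z$, $C_k=\{c_{(k-1)(r-1)+1},\ldots,c_{k(r-1)}\}$ for $k\le d+1$. Rainbow $r$-partition: $r$-tuple $(R_1,\ldots,R_r)$ of pairwise disjoint subsets of $C$ with $|R_i\cap C_j|\le1$; maximal if it covers $C$. $\mathbf{R}$: maximal rainbow $r$-partitions with $z\in R_r$. $\mathcal{R}-a$: remove $a$ from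 its class. For $\mathcal{R}\in\mathbf{R}$ and $k\in[d+1]$, $\pi_k$ is the permutation of $[r]$ with $\pi_k(j)=i$ where $c_{(k-1)(r-1)+j}\in R_i$ ($j\in[r-1]$) and $\pi_k(r)$ the unique remaining index; $\operatorname{csgn}(\mathcal{R})=\prod_{k=1}^{d+1}\operatorname{sgn}\pi_k$. *)

(* Defs.v *)
From HB Require Import structures.
From mathcomp Require Import all_boot all_order all_algebra all_fingroup.
Set Implicit Arguments. Unset Strict Implicit. Unset Printing Implicit Defensive.
Import Order.TTheory GRing.Theory Num.Theory.

(* N = (d+1)(r-1); ground set C = {c_0,...,c_N} indexed by 'I_(N+1) (0-indexed),
   z = c_N is the last point. *)
Definition Nn (d r : nat) : nat := (d.+1 * r.-1)%N.

Definition gidx (d r : nat) := 'I_(Nn d r).+1.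

Definition zidx (d r : nat) : gidx d r := ord_max.

(* colour of index k: block k / (r-1) for k < N (colour classes C_1..C_{d+1}
   become 0..d), and colour d+1 for z (class C_{d+2} = {z}). *)
Definition colour (d r : nat) (k : gidx d r) : nat :=
  if (k < Nn d r)%N then (k %/ r.-1)%N else d.+1.

Definition colclass (d r : nat) (j : 'I_(d.+2)) : {set gidx d r} :=
  [set k : gidx d r | colour k == j].

(* an r-tuple of subsets of the ground set (classes 'I_r = R_1..R_r, 0-indexed) *)
Definition rtuple (d r : nat) := {ffun 'I_r -> {set gidx d r}}.

Definition rainbow (d r : nat) (P : rtuple d r) : Prop :=
  (forall i j : 'I_r, i != j -> [disjoint P i & P j]) /\
  (forall (i : 'I_r) (j : 'I_(d.+2)), (#|P i :&: @colclass d r j| <= 1)%N).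

Definition maximal_rainbow (d r : nat) (P : rtuple d r) : Prop :=
  rainbow P /\ \bigcup_(i < r) P i = [set: gidx d r].

Definition inbR (d r : nat) (P : rtuple d r) : Prop :=
  maximal_rainbow P /\ exists i : 'I_r, val i = r.-1 /\ zidx d r \in P i.

Definition rem_pt (d r : nat) (P : rtuple d r) (a : gidx d r) : rtuple d r :=
  [ffun i => P i :\ a].

Definition class_of (d r : nat) (P : rtuple d r) (x : gidx d r) (dflt : 'I_r) : 'I_r :=
  odflt dflt [pick i : 'I_r | x \in P i].

Definition blk_el (d r : nat) (k : 'I_(d.+1)) (j : nat) : gidx d r :=
  inord (k * r.-1 + j).

Definition pi_fun (d r : nat) (P : rtuple d r) (k : 'I_(d.+1)) (j : 'I_r) : 'I_r :=
  if (val j < r.-1)%N then class_of P (@blk_el d r k j) j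
  else odflt j [pick i : 'I_r |
                  [forall j' : 'I_r, (val j' < r.-1)%N ==>
                                     (class_of P (@blk_el d r k j') j' != i)]].

Definition sgn_fun (r : nat) (g : 'I_r -> 'I_r) : int :=
  match [pick s : {perm 'I_r} | [forall j, s j == g j]] with
  | Some s => (-1) ^+ odd_perm s
  | None => 0
  end.

Definition csgn (d r : nat) (P : rtuple d r) : int :=
  (\prod_(k < d.+1) sgn_fun (pi_fun P k))%R.

Definition sqdist (R : realFieldType) (n : nat) (u v : 'rV[R]_n) : R :=
  (\sum_(j < n) (u 0 j - v 0 j) ^+ 2)%R.

Definition regular_simplex_at0 (R : realFieldType) (r : nat)
    (w : 'I_r -> 'rV[R]_(r.-1)) : Prop :=
  (\sum_(i < r) w i = 0)%R /\
  exists s : R, (0 < s)%R /\ forall i j : 'I_r, i != j -> sqdist (w i) (w j) = s.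

(* phi_i(x) = (x,1) (x) w_i in R^((d+1)(r-1)), as the Kronecker product of the
   row vectors (x,1) and w_i (vectorised outer product) *)
Definition phi (R : realFieldType) (d r : nat) (x : 'rV[R]_d) (wi : 'rV[R]_(r.-1))
  : 'rV[R]_((d + 1) * r.-1) :=
  mxvec ((row_mx x (const_mx 1%R : 'rV[R]_1))^T *m wi).

Definition Phi (R : realFieldType) (d r : nat) (c : gidx d r -> 'rV[R]_d)
    (w : 'I_r -> 'rV[R]_(r.-1)) (P : rtuple d r) : 'rV[R]_((d + 1) * r.-1) -> Prop :=
  fun v => exists (i : 'I_r) (p : gidx d r), p \in P i /\ v = @phi R d r (c p) (w i).

Definition Phi_sub (R : realFieldType) (d r : nat) (c : gidx d r -> 'rV[R]_d)
    (w : 'I_r -> 'rV[R]_(r.-1)) (P Q : rtuple d r) : Prop :=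
  forall v, Phi c w P v -> Phi c w Q v.

(* Main.v *)
Require Import Defs.
From HB Require Import structures.
From mathcomp Require Import all_boot all_order all_algebra all_fingroup.
Import Order.TTheory GRing.Theory Num.Theory.

Set Implicit Arguments. Unset Strict Implicit. Unset Printing Implicit Defensive.

Section Geo.
Local Open Scope ring_scope.

Lemma phi_inj (R : realFieldType) (d q : nat) (x1 x2 : 'rV[R]_d) (u1 u2 : 'rV[R]_q) :
  u1 != 0 -> phi (r:=q.+1) x1 u1 = phi (r:=q.+1) x2 u2 -> x1 = x2 /\ u1 = u2.
Proof.
move=> nz /(can_inj mxvecK) E.
have Ent : forall i j, (row_mx x1 (const_mx 1 : 'rV[R]_1)) 0 i * u1 0 j =
                       (row_mx x2 (const_mx 1 : 'rV[R]_1)) 0 i * u2 0 j.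
  move=> i j; have := congr1 (fun M : 'M[R]_(d + 1, q) => M i j) E.
  by rewrite !mxE !big_ord1 !mxE.
have Eu : u1 = u2.
  apply/matrixP=> i j; rewrite (ord1 i).
  by have := Ent (rshift d (0 : 'I_1)) j; rewrite !row_mxEr !mxE !mul1r.
split=> //; subst u2.
have [j0 nzj] : exists j0, u1 0 j0 != 0.
  apply/existsP; apply: contraNT nz; rewrite negb_exists => /forallP H.
  apply/eqP/matrixP=> i j; rewrite (ord1 i) mxE; exact/eqP/negPn/H.
apply/matrixP=> i j; rewrite (ord1 i).
have := Ent (lshift 1 j) j0; rewrite !row_mxEl => /mulIf; apply; exact: nzj.
Qed.

Definition dotv (R : realFieldType) (n : nat) (u v : 'rV[R]_n) : R :=
  \sum_(l < n) u 0 l * v 0 l.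

Lemma sqdistE (R : realFieldType) (n : nat) (u v : 'rV[R]_n) :
  sqdist u v = dotv u u + dotv v v - (dotv u v) *+ 2.
Proof.
rewrite /sqdist /dotv.
under eq_bigr do rewrite sqrrB.
rewrite big_split /= sumrB sumrMnl.
rewrite addrAC; congr (_ + _ - _); by apply: eq_bigr => l _; rewrite expr2.
Qed.

Lemma dotv0 (R : realFieldType) (n : nat) (u : 'rV[R]_n) : dotv u 0 = 0.
Proof. by rewrite /dotv big1 // => l _; rewrite mxE mulr0. Qed.

Lemma dotvC (R : realFieldType) (n : nat) (u v : 'rV[R]_n) : dotv u v = dotv v u.
Proof. by apply: eq_bigr => l _; rewrite mulrC. Qed.

Lemma dotv_sumr (R : realFieldType) (n m : nat) (u : 'rV[R]_n) (F : 'I_m -> 'rV[R]_n) :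
  dotv u (\sum_k F k) = \sum_k dotv u (F k).
Proof.
rewrite /dotv exchange_big /=; apply: eq_bigr => l _.
by rewrite summxE mulr_sumr.
Qed.

Lemma simplex_inj (R : realFieldType) (q : nat) (w : 'I_q.+1 -> 'rV[R]_q) :
  regular_simplex_at0 w -> injective w.
Proof.
move=> [_ [s [s0 Hs]]] i j E; apply/eqP; apply: contraT => ne.
have := Hs i j ne; rewrite E /sqdist big1 => [|l _]; last by rewrite subrr expr0n.
by move=> s0'; move: s0; rewrite -s0' ltxx.
Qed.

Lemma simplex_nz (R : realFieldType) (q : nat) (w : 'I_q.+1 -> 'rV[R]_q) :
  (0 < q)%N -> regular_simplex_at0 w -> forall i, w i != 0.
Proof.
move=> q0 [sum0 [s [s0 Hs]]] i; apply/negP => /eqP wi0.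
pose j0 : 'I_q.+1 := if i == ord0 then ord_max else ord0.
have j0i : j0 != i.
  rewrite /j0; case: (eqVneq i ord0) => [->|ne]; last by rewrite eq_sym.
  by rewrite -val_eqE /= -lt0n.
have Hj : forall j, j != i -> dotv (w j) (w j) = s.
  move=> j ji; have := Hs j i ji; rewrite sqdistE wi0 !dotv0 mul0rn subr0 addr0.
  by [].
have Hjk : forall j k, j != i -> k != i -> j != k -> dotv (w j) (w k) *+ 2 = s.
  move=> j k ji ki jk; have := Hs j k jk; rewrite sqdistE Hj // Hj //.
  move=> E.
  move/eqP: E; rewrite subr_eq addrC => /eqP E0; by rewrite (addrI _ E0).
have : \sum_k dotv (w j0) (w k) *+ 2 = 0.
  by rewrite sumrMnl -dotv_sumr sum0 dotv0 mul0rn.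
rewrite (bigD1 j0) //= Hj //.
have ge0 : 0 <= \sum_(k | k != j0) dotv (w j0) (w k) *+ 2.
  apply: sumr_ge0 => k kj0; case: (eqVneq k i) => [->|ki].
    by rewrite wi0 dotv0 mul0rn.
  by rewrite Hjk // ?(ltW s0) // eq_sym.
move=> E; have : 0 < s *+ 2 + \sum_(k | k != j0) dotv (w j0) (w k) *+ 2.
  by apply: ltr_wpDr => //; rewrite pmulrn_rgt0.
by rewrite E ltxx.
Qed.

End Geo.

Section Comb.
Variables d r : nat.
Local Notation T := (gidx d r.+1).
Local Notation z := (zidx d r.+1).

Lemma Nn_eq : Nn d r.+1 = (d.+1 * r)%N.
Proof. by []. Qed.

Lemma lt_N (x : T) : x != z -> (x < Nn d r.+1)%N.
Proof.
move=> xz; have := ltn_ord x; rewrite ltnS leq_eqVlt => /orP [/eqP E|//].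
by case/eqP: xz; apply: val_inj.
Qed.

Lemma r_pos (x : T) : x != z -> (0 < r)%N.
Proof. move=> /lt_N; move: (val x) => n; rewrite Nn_eq; case: r => //; by rewrite muln0. Qed.

Lemma colour_nz (x : T) : x != z -> colour x = (x %/ r)%N.
Proof. by move=> xz; rewrite /colour lt_N. Qed.

Lemma colour_z : colour z = d.+1.
Proof. by rewrite /colour /= ltnn. Qed.

Lemma colour_nz_lt (x : T) : x != z -> (colour x < d.+1)%N.
Proof.
move=> xz; rewrite colour_nz // ltn_divLR ?(r_pos xz) //; exact: lt_N.
Qed.

Lemma colour_lt2 (x : T) : (colour x < d.+2)%N.
Proof.
case: (eqVneq x z) => [->|xz]; first by rewrite colour_z.
by apply: ltnW; rewrite ltnS; apply: colour_nz_lt.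
Qed.

Lemma blk_val (k : 'I_d.+1) (j : nat) : (j < r)%N ->
  val (blk_el r.+1 k j) = (k * r + j)%N.
Proof.
move=> jr; rewrite /blk_el /= inordK //.
apply: leq_trans (_ : (k.+1 * r).+1 <= _)%N.
  by rewrite ltnS mulSn addnC leq_add2r ltnW.
by rewrite ltnS Nn_eq leq_mul2r ltn_ord orbT.
Qed.

Lemma blk_ltN (k : 'I_d.+1) (j : nat) : (j < r)%N ->
  (val (blk_el r.+1 k j) < Nn d r.+1)%N.
Proof.
move=> jr; rewrite blk_val //; apply: leq_trans (_ : (k.+1 * r) <= _)%N.
  by rewrite mulSn addnC ltn_add2r.
by rewrite Nn_eq leq_mul2r ltn_ord orbT.
Qed.

Lemma blk_nz (k : 'I_d.+1) (j : nat) : (j < r)%N -> blk_el r.+1 k j != z.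
Proof.
move=> jr; apply/negP => /eqP E; have := blk_ltN k jr; rewrite E /= ltnn //.
Qed.

Lemma blk_colour (k : 'I_d.+1) (j : nat) : (j < r)%N -> colour (blk_el r.+1 k j) = k.
Proof.
move=> jr; rewrite /colour blk_ltN // blk_val // divnMDl; last by case: r jr.
by rewrite divn_small // addn0.
Qed.

Lemma blk_inj (k : 'I_d.+1) (j1 j2 : nat) : (j1 < r)%N -> (j2 < r)%N ->
  blk_el r.+1 k j1 = blk_el r.+1 k j2 -> j1 = j2.
Proof.
move=> h1 h2 /(congr1 val); rewrite !blk_val //; exact: addnI.
Qed.

Lemma colour_blk (x : T) (k : 'I_d.+1) : x != z -> colour x = k ->
  exists j, (j < r)%N /\ x = blk_el r.+1 k j.
Proof.
move=> xz ck; have rp := r_pos xz; exists (x %% r)%N; split; first by rewrite ltn_pmod.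
apply: val_inj; rewrite blk_val ?ltn_pmod // -ck colour_nz //.
exact: divn_eq.
Qed.


Lemma pcover (P : rtuple d r.+1) : inbR P -> forall x, exists i, x \in P i.
Proof.
move=> [[_ hc] _] x; have : x \in \bigcup_(i < r.+1) P i by rewrite hc inE.
by case/bigcupP => i _ xi; exists i.
Qed.

Lemma disj (P : rtuple d r.+1) : inbR P -> forall x i j, x \in P i -> x \in P j -> i = j.
Proof.
move=> [[[hd _] _] _] x i j xi xj; apply/eqP; apply: contraT => ij.
by rewrite (disjointFr (hd i j ij) xi) in xj.
Qed.

Lemma rbow (P : rtuple d r.+1) : inbR P -> forall x y i, x \in P i -> y \in P i ->
  colour x = colour y -> x = y.
Proof.
move=> [[[_ hr] _] _] x y i xi yi cxy.
have := hr i (Ordinal (colour_lt2 x)) => /card_le1_eqP; apply;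
  rewrite !inE ?xi ?yi /= ?cxy //.
Qed.

Lemma zmem (P : rtuple d r.+1) : inbR P -> forall i, (z \in P i) = (i == ord_max).
Proof.
move=> hP i; have [_ [i0 [vi0 zi0]]] := hP.
have E : i0 = ord_max by apply: val_inj.
rewrite E in zi0.
apply/idP/eqP => [zi|->//]; exact: (disj hP zi zi0).
Qed.

Lemma class_ofE (P : rtuple d r.+1) : inbR P -> forall x i dflt, x \in P i ->
  class_of P x dflt = i.
Proof.
move=> hP x i dflt xi; rewrite /class_of; case: pickP => [i' xi'|/(_ i)]; last by rewrite xi.
by rewrite /= (disj hP xi' xi).
Qed.

Lemma same_classes (P Q : rtuple d r.+1) : inbR P -> inbR Q ->
  (forall i x, x \in P i -> x \in Q i) -> P = Q.
Proof.
move=> hP hQ H; apply/ffunP => i; apply/setP => x; apply/idP/idP => [|xQ]; first exact: H.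
have [i' xi'] := pcover hP x; have := H _ _ xi'; move/(disj hQ xQ) => E.
by rewrite E.
Qed.

Lemma sgn_funE (g : 'I_r.+1 -> 'I_r.+1) (s : {perm 'I_r.+1}) :
  s =1 g -> sgn_fun g = ((-1) ^+ odd_perm s)%R.
Proof.
move=> sg; rewrite /sgn_fun; case: pickP => [s' /forallP H|/(_ s)].
  have -> // : s' = s by apply/permP => j; rewrite sg; exact/eqP.
by move/forallP; case=> j; rewrite sg.
Qed.

Section Pi.
Variables (P : rtuple d r.+1) (hP : inbR P) (k : 'I_d.+1).
Local Notation f := (pi_fun P k).

Lemma ltr_nmax (j : 'I_r.+1) : (j < r)%N = (j != ord_max).
Proof. by rewrite -val_eqE /= ltn_neqAle -ltnS ltn_ord andbT. Qed.

Lemma pi_blk (j : 'I_r.+1) : j != ord_max -> blk_el r.+1 k j \in P (f j).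
Proof.
rewrite -ltr_nmax => jr; rewrite /pi_fun /= jr.
have [i xi] := pcover hP (blk_el r.+1 k j).
by rewrite (class_ofE hP _ xi).
Qed.

Lemma pi_inj_nmax (j1 j2 : 'I_r.+1) : j1 != ord_max -> j2 != ord_max -> f j1 = f j2 -> j1 = j2.
Proof.
move=> h1 h2 E; have b1 := pi_blk h1; have b2 := pi_blk h2; rewrite E in b1.
move: h1 h2; rewrite -!ltr_nmax => h1 h2.
have := rbow hP b1 b2; rewrite !blk_colour // => /(_ erefl) /blk_inj.
by move=> /(_ h1 h2) /val_inj.
Qed.

Lemma pi_max (j : 'I_r.+1) : j != ord_max -> f j != f ord_max.
Proof.
move=> jm.
have ex : exists i, [forall j' : 'I_r.+1, (val j' < r.+1.-1)%N ==>
                   (class_of P (blk_el r.+1 k j') j' != i)].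
  apply/existsP; apply: contraT; rewrite negb_exists => /forallP H.
  pose g := fun j' : 'I_r.+1 => class_of P (blk_el r.+1 k j') j'.
  have sub : [set: 'I_r.+1] \subset g @: [set~ ord_max].
    apply/subsetP => i _; have := H i; rewrite negb_forall => /existsP [j' ].
    rewrite negb_imply negbK => /andP [j'r /eqP <-].
    by apply: imset_f; rewrite !inE -ltr_nmax.
  have := subset_leq_card sub; rewrite cardsT card_ord.
  by move/leq_trans => /(_ _ (leq_imset_card _ _)); rewrite cardsC1 card_ord ltnn.
rewrite /pi_fun /= ltnn; case: pickP => [i /forallP Hi|/(_ _)]; last first.
  by case: ex => i Hi /(_ i); rewrite Hi.
have := Hi j; rewrite /= ltr_nmax jm /=.
by [].
Qed.

Lemma pi_inj : injective f.
Proof.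
move=> j1 j2 E.
case: (eqVneq j1 ord_max) => [e1|n1]; case: (eqVneq j2 ord_max) => [e2|n2].
- by rewrite e1 e2.
- by have := pi_max n2; rewrite -E e1 eqxx.
- by have := pi_max n1; rewrite E e2 eqxx.
- exact: pi_inj_nmax.
Qed.

Lemma pi_perm : exists s : {perm 'I_r.+1}, s =1 f.
Proof. by exists (perm pi_inj); apply: permE. Qed.

End Pi.


Lemma mk_inbR (Q : rtuple d r.+1) :
  (forall x i j, x \in Q i -> x \in Q j -> i = j) ->
  (forall x y i, x \in Q i -> y \in Q i -> colour x = colour y -> x = y) ->
  (forall x, exists i, x \in Q i) -> z \in Q ord_max -> inbR Q.
Proof.
move=> hd hr hc hz; split; last by exists ord_max.
split; last first.
  apply/setP => x; rewrite inE; case: (hc x) => i xi; apply/bigcupP; by exists i.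
split.
  move=> i j ij; rewrite -setI_eq0; apply/eqP/setP => x; rewrite !inE.
  apply/negP => /andP [xi xj]; by move: ij; rewrite (hd _ _ _ xi xj) eqxx.
move=> i j; apply/card_le1_eqP => x y; rewrite !inE => /andP [xi /eqP cx] /andP [yi /eqP cy].
by apply: (hr _ _ i) => //; rewrite cx cy.
Qed.

End Comb.

Section Main.
Variables (d r : nat) (P : rtuple d r.+1) (hP : inbR P) (a : gidx d r.+1)
  (ha : a != zidx d r.+1).
Local Notation z := (zidx d r.+1).

Let k0 : 'I_d.+1 := Ordinal (colour_nz_lt ha).
Let f := pi_fun P k0.
Let m := f ord_max.

Lemma a_blk : exists jA : 'I_r.+1, (jA != ord_max) && (a == blk_el r.+1 k0 jA).
Proof.
have [j [jr ->]] := @colour_blk d r a k0 ha erefl.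
by exists (@Ordinal r.+1 j (ltnW jr)); rewrite -ltr_nmax /= jr eqxx.
Qed.

Let jA := xchoose a_blk.
Lemma jAP : jA != ord_max /\ a = blk_el r.+1 k0 jA.
Proof. by have /andP [h /eqP e] := xchooseP a_blk. Qed.
Let jcl := f jA.

Lemma a_jcl : a \in P jcl.
Proof. by case: jAP => h e; rewrite {1}e; exact: pi_blk. Qed.

Lemma jcl_m : jcl != m.
Proof. by case: jAP => h _; exact: pi_max. Qed.

Lemma a_nm : a \notin P m.
Proof. by apply/negP => am; have := disj hP am a_jcl; move/eqP; rewrite eq_sym (negPf jcl_m). Qed.

Lemma col_a : colour a = k0.
Proof. by []. Qed.

Lemma nocol x : x \in P m -> colour x != k0.
Proof.
move=> xm; apply/negP => /eqP cx.
case: (eqVneq x z) => [xz|xz].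
  by move: cx; rewrite xz colour_z => e; have := ltn_ord k0; rewrite -e ltnn.
have [j [jr ex]] := colour_blk xz cx.
pose j' : 'I_r.+1 := @Ordinal r.+1 j (ltnW jr).
have j'm : j' != ord_max by rewrite -ltr_nmax.
have := pi_blk hP k0 j'm; rewrite /= -ex => xf.
by have := pi_max P k0 j'm; rewrite (disj hP xf xm) eqxx.
Qed.

Definition P' : rtuple d r.+1 := [ffun i => if i == m then a |: P i else P i :\ a].

Lemma memP' x i : (x \in P' i) = (if x == a then i == m else x \in P i).
Proof.
rewrite ffunE; case: (eqVneq x a) => [->|xa]; case: (eqVneq i m) => [->|im];
  rewrite !inE ?eqxx ?(negPf xa) //=.
Qed.

Lemma inbR_P' : inbR P'.
Proof.
apply: mk_inbR.
- move=> x i j; rewrite !memP'; case: (x == a); first by move=> /eqP -> /eqP ->.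
  move=> xi xj; exact: (disj hP xi xj).
- move=> x y i; rewrite !memP'; case: (eqVneq x a) => [->|xa]; case: (eqVneq y a) => [->|ya] //.
  + move=> /eqP -> ym ca; have := nocol ym; by rewrite -ca col_a eqxx.
  + move=> xm /eqP im; rewrite im in xm; have := nocol xm; by move=> /negP nc ca; case: nc; rewrite ca col_a.
  + move=> xi yi; exact: (rbow hP xi yi).
- move=> x; case: (eqVneq x a) => [->|xa]; first by exists m; rewrite memP' !eqxx.
  have [i xi] := pcover hP x; exists i; by rewrite memP' (negPf xa).
- by rewrite memP' eq_sym (negPf ha) (zmem hP).
Qed.

Lemma P'_ne : P' <> P.
Proof. by move=> E; have := a_nm; rewrite -E memP' !eqxx. Qed.


Variables (R : realFieldType) (c : gidx d r.+1 -> 'rV[R]_d) (w : 'I_r.+1 -> 'rV[R]_r)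
  (hc : injective c) (hw : regular_simplex_at0 w).

Lemma rem2E x i : (x \in rem_pt (rem_pt P z) a i) = [&& x != a, x != z & x \in P i].
Proof. by rewrite !ffunE !inE. Qed.

Lemma Phi_P' : Phi_sub c w (rem_pt (rem_pt P z) a) (rem_pt P' z).
Proof.
move=> v [i [p [pi ->]]]; exists i, p; split => //.
move: pi; rewrite rem2E ffunE !inE memP' => /and3P [pa pz ppi].
by rewrite pz (negPf pa).
Qed.

Lemma incl (Q : rtuple d r.+1) : Phi_sub c w (rem_pt (rem_pt P z) a) (rem_pt Q z) ->
  forall i x, x \in P i -> x != z -> x != a -> x \in Q i.
Proof.
move=> H i x xi xz xa.
have [i' [p [pi' E]]] : Phi c w (rem_pt Q z) (phi (r:=r.+1) (c x) (w i)).
  apply: H; exists i, x; split => //; by rewrite rem2E xa xz.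
have [/hc ex /(simplex_inj hw) ei] := phi_inj (simplex_nz (r_pos ha) hw i) E.
by move: pi'; rewrite ffunE !inE -ex -ei => /andP [].
Qed.


Lemma uniq_P' (Q : rtuple d r.+1) : inbR Q -> Q <> P ->
  Phi_sub c w (rem_pt (rem_pt P z) a) (rem_pt Q z) -> Q = P'.
Proof.
move=> hQ QP HQ; have inc := incl HQ.
have [i0 ai0] := pcover hQ a.
have zeq : forall i, (z \in Q i) = (z \in P i) by move=> i; rewrite (zmem hQ) (zmem hP).
have i0m : i0 = m.
  apply/eqP; apply: contraT => i0m.
  case: (eqVneq i0 jcl) => [e|i0j].
    case: QP; symmetry; apply: same_classes => // i x xi.
    case: (eqVneq x z) => [xz|xz]; first by rewrite xz zeq -xz.
    case: (eqVneq x a) => [xa|xa]; last exact: inc.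
    by rewrite xa in xi *; rewrite (disj hP xi a_jcl) -e.
  have [s sf] := pi_perm hP k0.
  pose x0 := (s^-1)%g i0.
  have sx0 : s x0 = i0 by rewrite /x0 permKV.
  have x0m : x0 != ord_max.
    by apply: contra i0m => /eqP e; rewrite -sx0 e sf.
  have bi0 := pi_blk hP k0 x0m; rewrite -sf sx0 in bi0.
  have ba : blk_el r.+1 k0 x0 != a.
    by apply/negP => /eqP e; rewrite e in bi0; move: i0j; rewrite (disj hP bi0 a_jcl) eqxx.
  have x0r : (x0 < r)%N by rewrite ltr_nmax.
  have bQ : blk_el r.+1 k0 x0 \in Q i0 by apply: inc => //; exact: blk_nz.
  have : blk_el r.+1 k0 x0 = a.
    by apply: (rbow hQ bQ ai0); rewrite blk_colour.
  by move/eqP; rewrite (negPf ba).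
symmetry; apply: same_classes => //; first exact: inbR_P'.
move=> i x; rewrite memP'; case: (eqVneq x a) => [->/eqP ->|xa xi]; first by rewrite -i0m.
case: (eqVneq x z) => [xz|xz]; first by rewrite xz zeq -xz.
exact: inc.
Qed.


Lemma class_of_P' x dflt : x != a -> class_of P' x dflt = class_of P x dflt.
Proof.
move=> xa; rewrite /class_of; congr (odflt _ _); apply: eq_pick => i /=.
by rewrite memP' (negPf xa).
Qed.

Lemma pi_other k : k != k0 -> pi_fun P' k =1 pi_fun P k.
Proof.
move=> kk j.
have E : forall j' : 'I_r.+1, (j' < r)%N ->
    class_of P' (blk_el r.+1 k j') j' = class_of P (blk_el r.+1 k j') j'.
  move=> j' jr; apply: class_of_P'; apply: contra kk => /eqP e.
  apply/eqP; apply: val_inj => /=; by rewrite -(blk_colour k jr) e.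
rewrite /pi_fun /=; case: ifP => jr; first exact: E.
congr (odflt _ _); apply: eq_pick => i /=; apply: eq_forallb => j'.
by case: (ltnP j' r) => //= j'r; rewrite E.
Qed.

Lemma pi_k0 (s : {perm 'I_r.+1}) : s =1 f -> (s * tperm jcl m)%g =1 pi_fun P' k0.
Proof.
move=> sf.
have hP' := inbR_P'.
have nmax : forall j, j != ord_max -> (s * tperm jcl m)%g j = pi_fun P' k0 j.
  move=> j jm; rewrite permM sf.
  have jr : (j < r)%N by rewrite ltr_nmax.
  rewrite /pi_fun /= jr; case: jAP => jAm ea.
  case: (eqVneq j jA) => [->|jjA].
    rewrite -/f -/jcl tpermL (class_ofE hP' (i:=m)) // -ea memP' !eqxx //.
  have ne : blk_el r.+1 k0 j != a.
    apply/negP => /eqP e; move: jjA; rewrite ea in e.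
    by rewrite (pi_inj_nmax hP jm jAm (congr1 f (esym (esym _))) ) ?eqxx //; move: e => /blk_inj;
       move=> /(_ jr); rewrite ltr_nmax => /(_ jAm) /val_inj ->.
  rewrite (class_of_P' _ ne) (class_ofE hP _ (pi_blk hP k0 jm)) tpermD //.
    by apply: contra jjA => /eqP e; rewrite (pi_inj hP (esym e)).
  by rewrite eq_sym; apply: pi_max.
move=> j; case: (eqVneq j ord_max) => [->|jm]; last exact: nmax.
pose t := (s * tperm jcl m)%g.
pose y := pi_fun P' k0 ord_max.
pose x0 := (t^-1)%g y.
have tx0 : t x0 = y by rewrite /x0 permKV.
case: (eqVneq x0 ord_max) => [e|x0m]; first by rewrite e in tx0; exact: tx0.
have := nmax _ x0m; rewrite -/t tx0 => /(pi_inj hP') e.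
by move: x0m; rewrite -e eqxx.
Qed.


Lemma csgn_P' : csgn P' = (- csgn P)%R.
Proof.
have [s sf] := pi_perm hP k0.
rewrite /csgn (bigD1 k0) //= [in RHS](bigD1 k0) //=.
rewrite (sgn_funE (pi_k0 sf)) (sgn_funE sf).
have -> : (\prod_(k < d.+1 | k != k0) sgn_fun (pi_fun P' k) =
          \prod_(k < d.+1 | k != k0) sgn_fun (pi_fun P k))%R.
  apply: eq_bigr => k kk; have [sk skf] := pi_perm hP k.
  rewrite (sgn_funE skf); apply: sgn_funE => j; by rewrite skf pi_other.
by rewrite odd_permM odd_tperm jcl_m signr_addb expr1 mulrN1 mulNr.
Qed.

End Main.

Unset Implicit Arguments.

Theorem lemma8 (R : realFieldType) (d r : nat)
  (c : gidx d r -> 'rV[R]_d) (w : 'I_r -> 'rV[R]_(r.-1))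
  (hc : injective c) (hw : regular_simplex_at0 w)
  (P : rtuple d r) (hP : inbR P) (a : gidx d r) (ha : a != zidx d r) :
  exists P' : rtuple d r,
    (inbR P' /\ P' <> P /\
     Phi_sub c w (rem_pt (rem_pt P (zidx d r)) a) (rem_pt P' (zidx d r))) /\
    (forall P'' : rtuple d r,
       inbR P'' /\ P'' <> P /\
       Phi_sub c w (rem_pt (rem_pt P (zidx d r)) a) (rem_pt P'' (zidx d r)) ->
       P'' = P') /\
    csgn P' = (- csgn P)%R.
Proof.
move: c w hc hw P hP a ha; case: r => [|r] c w hc hw P hP a ha.
  exfalso; have N0 : Nn d 0 = 0%N by rewrite /Nn muln0.
  have h : (nat_of_ord a < 1)%N.
    have := ltn_ord a; by rewrite [X in (_ < X.+1)%N -> _]N0.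
  case/eqP: ha; apply: val_inj; rewrite /=.
  move: h; rewrite ltnS leqn0 => /eqP ->; by rewrite N0.
exists (P' P ha); split; first split; [exact: inbR_P' | split; [exact: P'_ne | exact: Phi_P']|].
split; last exact: csgn_P'.
move=> Q [hQ [QP HQ]]; exact: (uniq_P' hP ha hc hw hQ QP HQ).
Qed.
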